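(* Let $m, N, T$ be positive integers, let $\gamma \in [0,1)$, and let $a_1,\ldots,a_N \in [0,1]$ and $b_1,\ldots,b_N \in [0,1]$ satisfy $\sum_{j=1}^N a_j = 1$ and $\sum_{j=1}^N b_j = 1$. Put $$q(z) = a_1 + a_2 z + \cdots + a_N z^{N-1}, \qquad p(z) = b_1 z + b_2 z^2 + \cdots + b_N z^N,$$ $$\Phi(z) = (1-\gamma)^T \frac{z\,(q(z))^T}{(1-\gamma p(z))^T}.$$ Let $\mu_1,\ldots,\mu_m \in \mathbb{C}$ and consider the polynomial in $\lambda$ $$\tilde f(\lambda) = \prod_{j=1}^m \Big( \big[\lambda^N - \gamma \lambda^N p(\lambda^{-1})\big]^T - (1-\gamma)^T \mu_j \lambda^{T-1} \big[\lambda^{N-1} q(\lambda^{-1})\big]^T \Big).$$ Then all roots of $\tilde f$ lie in the open unit disc $D = \{z \in \mathbb{C} : |z| < 1\}$ if and only if $$\mu_j \in \big(\overline{\mathbb{C}} \setminus \Phi(\overline{D})\big)^*, \qquad j = 1,\ldots,m,$$ where $\overline{D} = \{z \in \mathbb{C} : |z| \le 1\}$.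
   Context: $\overline{\mathbb{C}} = \mathbb{C} \cup \{\infty\}$ denotes the extended complex plane. For a set $S \subseteq \overline{\mathbb{C}}$, $S^* = \{ z^* : z \in S\}$, where the inversion is $z^* = 1/\bar z$ ($\bar z$ the complex conjugate), with the conventions $0^* = \infty$ and $\infty^* = 0$. Here $\lambda^N p(\lambda^{-1})$ and $\lambda^{N-1} q(\lambda^{-1})$ denote the polynomials $b_1\lambda^{N-1} + \cdots + b_N$ and $a_1 \lambda^{N-1} + \cdots + a_N$, respectively. *)

(* Defs.v *)
From HB Require Import structures.
From mathcomp Require Import all_boot all_order all_algebra.
From mathcomp Require Import reals.
From mathcomp Require Import complex.
Set Implicit Arguments. Unset Strict Implicit. Unset Printing Implicit Defensive.
Import Order.TTheory GRing.Theory Num.Theory.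
Local Open Scope ring_scope.
Local Open Scope complex_scope.

Section Defs.
Variable R : realType.
Local Notation C := R[i].

Inductive extC := Fin of C | Inf.

Definition ext_inv (z : extC) : extC :=
  match z with
  | Fin w => if w == 0 then Inf else Fin (w^*)^-1
  | Inf => Fin 0
  end.

Definition ext_star (S : extC -> Prop) : extC -> Prop :=
  fun w => exists z, S z /\ w = ext_inv z.

Definition ext_compl (S : extC -> Prop) : extC -> Prop := fun w => ~ S w.

(* q(z) = a_1 + a_2 z + ... + a_N z^(N-1)   (a is 0-indexed: a i = a_(i+1)) *)
Definition qpoly (N : nat) (a : 'I_N -> R) : {poly C} :=
  \sum_(i < N) ((a i)%:C)%:P * 'X^i.
Definition ppoly (N : nat) (b : 'I_N -> R) : {poly C} :=
  \sum_(i < N) ((b i)%:C)%:P * 'X^(i.+1).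
(* λ^N p(λ^{-1}) = b_1 λ^(N-1) + ... + b_N *)
Definition prev (N : nat) (b : 'I_N -> R) : {poly C} :=
  \sum_(i < N) ((b i)%:C)%:P * 'X^(N.-1 - i).
(* λ^(N-1) q(λ^{-1}) = a_1 λ^(N-1) + ... + a_N *)
Definition qrev (N : nat) (a : 'I_N -> R) : {poly C} :=
  \sum_(i < N) ((a i)%:C)%:P * 'X^(N.-1 - i).

Definition Phi (N T : nat) (gamma : R) (a b : 'I_N -> R) (z : C) : C :=
  ((1 - gamma)%:C) ^+ T * z * (qpoly a).[z] ^+ T
    / (1 - gamma%:C * (ppoly b).[z]) ^+ T.

Definition Phi_closed_disc (N T : nat) (gamma : R) (a b : 'I_N -> R)
  : extC -> Prop :=
  fun w => exists z : C, `|z| <= 1 /\ w = Fin (Phi T gamma a b z).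

Definition ftilde (m N T : nat) (gamma : R) (a b : 'I_N -> R)
  (mu : 'I_m -> C) : {poly C} :=
  \prod_(j < m)
    (('X^N - (gamma%:C)%:P * prev b) ^+ T
     - (((1 - gamma)%:C) ^+ T * mu j)%:P * 'X^(T.-1) * (qrev a) ^+ T).

End Defs.

(* Main.v *)
Require Import Defs.
From HB Require Import structures.
From mathcomp Require Import all_boot all_order all_algebra.
From mathcomp Require Import reals.
From mathcomp Require Import complex.
From mathcomp Require Import zify ring lra.
Import Order.TTheory GRing.Theory Num.Theory.
Local Open Scope ring_scope.
Local Open Scope complex_scope.
Set Implicit Arguments. Unset Strict Implicit.
Lemma qpolyE (R : realType) N (a : 'I_N -> R) (z : R[i]) :
  (Defs.qpoly a).[z] = \sum_(i < N) (a i)%:C * z ^+ i.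
Proof. by rewrite /Defs.qpoly horner_sum; apply: eq_bigr => i _; rewrite hornerE hornerXn. Qed.
Lemma ppolyE (R : realType) N (b : 'I_N -> R) (z : R[i]) :
  (ppoly b).[z] = \sum_(i < N) (b i)%:C * z ^+ i.+1.
Proof. by rewrite /ppoly horner_sum; apply: eq_bigr => i _; rewrite hornerE hornerXn. Qed.
Lemma prevE (R : realType) N (b : 'I_N -> R) (l z : R[i]) : l * z = 1 ->
  (Defs.prev b).[l] = l ^+ N * (ppoly b).[z].
Proof.
move=> lz; rewrite ppolyE /Defs.prev horner_sum mulr_sumr; apply: eq_bigr => i _.
rewrite hornerE hornerXn mulrCA; congr (_ * _).
have -> : l ^+ N = l ^+ (N.-1 - i) * l ^+ i.+1.
  by rewrite -exprD; congr (_ ^+ _); have := ltn_ord i; lia.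
by rewrite -mulrA -exprMn lz expr1n mulr1.
Qed.
Lemma qrevE (R : realType) N (a : 'I_N -> R) (l z : R[i]) : l * z = 1 ->
  (qrev a).[l] = l ^+ N.-1 * (Defs.qpoly a).[z].
Proof.
move=> lz; rewrite qpolyE /qrev horner_sum mulr_sumr; apply: eq_bigr => i _.
rewrite hornerE hornerXn mulrCA; congr (_ * _).
have -> : l ^+ N.-1 = l ^+ (N.-1 - i) * l ^+ i.
  by rewrite -exprD; congr (_ ^+ _); have := ltn_ord i; lia.
by rewrite -mulrA -exprMn lz expr1n mulr1.
Qed.
Lemma factorE (R : realType) N T (a b : 'I_N -> R) (g : R) (c l z : R[i]) :
  (0 < N)%N -> (0 < T)%N -> l * z = 1 ->
  (('X^N - ((g%:C)%:P * Defs.prev b)) ^+ T - c%:P * 'X^(T.-1) * (qrev a) ^+ T).[l]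
  = l ^+ (N * T) * ((1 - g%:C * (ppoly b).[z]) ^+ T - c * z * (Defs.qpoly a).[z] ^+ T).
Proof.
move=> hN hT lz.
rewrite !hornerE (prevE b lz) (qrevE a lz).
have -> : l ^+ N - g%:C * (l ^+ N * (ppoly b).[z]) = l ^+ N * (1 - g%:C * (ppoly b).[z]) by ring.
rewrite !exprMn -!exprM.
have -> : l ^+ (N * T) = l ^+ (T.-1 + N.-1 * T) * l.
  by rewrite -exprSr; congr (_ ^+ _); nia.
rewrite exprD.
set A := l ^+ T.-1. set B := l ^+ (N.-1 * T).
rewrite -[c * A * _]mulr1 -lz; ring.
Qed.
Lemma ppoly_le1 (R : realType) N (b : 'I_N -> R) (z : R[i]) :
  (forall i, 0 <= b i <= 1) -> \sum_(i < N) b i = 1 -> `|z| <= 1 ->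
  `|(ppoly b).[z]| <= 1.
Proof.
move=> hb hsb hz; rewrite ppolyE.
apply: (le_trans (ler_norm_sum _ _ _)).
have -> : (1 : R[i]) = \sum_(i < N) (b i)%:C by rewrite -rmorph_sum hsb.
apply: ler_sum => i _.
have b0 : 0 <= (b i)%:C by rewrite ler0c; case/andP: (hb i).
rewrite normrM normrX (ger0_norm b0).
by apply: ler_piMr => //; apply: exprn_ile1.
Qed.
Lemma den_neq0 (R : realType) N (b : 'I_N -> R) (g : R) (z : R[i]) :
  (forall i, 0 <= b i <= 1) -> \sum_(i < N) b i = 1 -> `|z| <= 1 ->
  0 <= g -> g < 1 -> 1 - g%:C * (ppoly b).[z] != 0.
Proof.
move=> hb hsb hz g0 g1; rewrite subr_eq0; apply/eqP => h.
have := ppoly_le1 hb hsb hz.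
have : `|g%:C * (ppoly b).[z]| = 1 by rewrite -h normr1.
rewrite normrM ger0_norm ?ler0c // => e.
move=> hp.
have : g%:C * `|(ppoly b).[z]| <= g%:C by apply: ler_piMr; rewrite ?ler0c.
rewrite e -[1]/(1%:C) lecR; lra.
Qed.
Lemma Phi_conj (R : realType) N T (a b : 'I_N -> R) (g : R) (z : R[i]) :
  conjc (Phi T g a b z) = Phi T g a b (conjc z).
Proof.
have cr : forall x : R, conjc (x%:C) = x%:C by move=> x; rewrite /= oppr0.
have cM : forall x y : R[i], conjc (x * y) = conjc x * conjc y by move=> x y; exact: rmorphM.
have cX : forall (x : R[i]) n, conjc (x ^+ n) = (conjc x) ^+ n by move=> x n; exact: rmorphXn.
have cV : forall x : R[i], conjc (x^-1) = (conjc x)^-1 by move=> x; exact: conjc_inv.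
have cB : forall x y : R[i], conjc (x - y) = conjc x - conjc y by move=> x y; exact: rmorphB.
have c1 : conjc (1 : R[i]) = 1 by exact: rmorph1.
have cD : forall x y : R[i], conjc (x + y) = conjc x + conjc y by move=> x y; exact: rmorphD.
have c0 : conjc (0 : R[i]) = 0 by exact: rmorph0.
have hq : conjc ((Defs.qpoly a).[z]) = (Defs.qpoly a).[conjc z].
  rewrite !qpolyE (big_morph _ cD c0); apply: eq_bigr => i _.
  by rewrite cM cX cr.
have hp : conjc ((ppoly b).[z]) = (ppoly b).[conjc z].
  rewrite !ppolyE (big_morph _ cD c0); apply: eq_bigr => i _.
  by rewrite cM cX cr.
by rewrite /Phi !(cM, cV, cX, cB, c1, cr, hq, hp).
Qed.
Definition Pj (R : realType) N T (g : R) (a b : 'I_N -> R) (mu : R[i]) :=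
  exists z : R[i], `|z| <= 1 /\ mu * Phi T g a b z = 1.

Lemma root_to_P (R : realType) N T (a b : 'I_N -> R) (g : R) (mu l : R[i]) :
  (0 < N)%N -> (0 < T)%N -> 0 <= g -> g < 1 ->
  (forall i, 0 <= b i <= 1) -> \sum_(i < N) b i = 1 ->
  (('X^N - ((g%:C)%:P * Defs.prev b)) ^+ T
     - (((1 - g)%:C) ^+ T * mu)%:P * 'X^(T.-1) * (qrev a) ^+ T).[l] = 0 ->
  ~ (`|l| < 1) -> Pj T g a b mu.
Proof.
move=> hN hT g0 g1 hb hsb hF hl.
have l0 : l != 0 by apply: contra_notN hl => /eqP ->; rewrite normr0 ltr01.
have hl1 : 1 <= `|l| by rewrite real_leNgt ?realE ?normr_ge0 ?ler01 //; apply/negP.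
have lz : l * l^-1 = 1 by rewrite mulfV.
have hz : `|l^-1| <= 1.
  by rewrite normrV ?unitfE // invr_le1 ?unitfE ?normr_eq0 ?normr_gt0.
exists l^-1; split => //.
move: hF; rewrite (factorE a b g _ hN hT lz) => /eqP.
rewrite mulf_eq0 expf_eq0 (negbTE l0) andbF /= subr_eq0 => /eqP e.
have D0 := den_neq0 hb hsb hz g0 g1.
have -> : mu * Phi T g a b l^-1 = (1 - g)%:C ^+ T * mu * l^-1 * (Defs.qpoly a).[l^-1] ^+ T
   / (1 - g%:C * (ppoly b).[l^-1]) ^+ T by rewrite /Phi; ring.
by rewrite -e mulfV // expf_eq0 negb_and D0 orbT.
Qed.

Lemma P_to_root (R : realType) N T (a b : 'I_N -> R) (g : R) (mu : R[i]) :
  (0 < N)%N -> (0 < T)%N -> 0 <= g -> g < 1 ->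
  (forall i, 0 <= b i <= 1) -> \sum_(i < N) b i = 1 ->
  Pj T g a b mu -> exists l : R[i],
  (('X^N - ((g%:C)%:P * Defs.prev b)) ^+ T
     - (((1 - g)%:C) ^+ T * mu)%:P * 'X^(T.-1) * (qrev a) ^+ T).[l] = 0
  /\ ~ (`|l| < 1).
Proof.
move=> hN hT g0 g1 hb hsb [z [hz e]].
have z0 : z != 0.
  by apply: contra_eq_neq e => ->; rewrite /Phi mulr0 !mul0r mulr0 eq_sym oner_neq0.
have lz : z^-1 * z = 1 by rewrite mulVf.
exists z^-1; split.
  rewrite (factorE a b g _ hN hT lz).
  have D0 := den_neq0 hb hsb hz g0 g1.
  have DT : (1 - g%:C * (ppoly b).[z]) ^+ T != 0 by rewrite expf_eq0 negb_and D0 orbT.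
  move: e; rewrite /Phi.
  set D := (1 - g%:C * (ppoly b).[z]) ^+ T => e.
  have -> : (1 - g)%:C ^+ T * mu * z * (Defs.qpoly a).[z] ^+ T = D.
    by rewrite -[RHS]mul1r -e; field.
  by rewrite subrr mulr0.
have zp : 0 < `|z| by rewrite normr_gt0.
rewrite normrV ?unitfE //.
by rewrite (le_gtF (_ : 1 <= `|z|^-1)) // invf_ge1.
Qed.

Lemma star_iff (R : realType) N T (a b : 'I_N -> R) (g : R) (mu : R[i]) :
  ext_star (ext_compl (Phi_closed_disc T g a b)) (Fin mu) <-> ~ Pj T g a b mu.
Proof.
have cV : forall x : R[i], conjc (x^-1) = (conjc x)^-1 by move=> x; exact: conjc_inv.
have cM : forall x y : R[i], conjc (x * y) = conjc x * conjc y by move=> x y; exact: rmorphM.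
have c0 : forall x : R[i], (conjc x == 0) = (x == 0) by move=> x; exact: conjc_eq0.
have nc : forall x : R[i], `|conjc x| = `|x| by move=> x; exact: norm_conjC.
split.
  move=> [w [hw e]] [z [hz hm]].
  case: w hw e => [w|] hw /=; last first.
    by case=> m0; move: hm; rewrite m0 mul0r => /eqP; rewrite eq_sym oner_eq0.
  case: ifP => // w0 [em].
  apply: hw; exists (conjc z); split; first by rewrite nc.
  rewrite -Phi_conj; congr Fin.
  have mu0 : mu != 0 by rewrite em invr_eq0 c0 w0.
  have : Phi T g a b z = mu^-1 by apply: (mulfI mu0); rewrite hm mulfV.
  by rewrite em invrK => ->; rewrite conjcK.
move=> nP.
have [->|m0] := eqVneq mu 0.
  by exists (Inf R); split => // -[z [_ ]].
exists (Fin (conjc mu)^-1); split.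
  move=> [z [hz [e]]]; apply: nP; exists (conjc z); split; first by rewrite nc.
  by rewrite -Phi_conj -e conjc_inv conjcK divff.
rewrite /= invr_eq0 c0 (negbTE m0); congr Fin.
have h : conjc ((conjc mu)^-1) = mu^-1 by rewrite cV conjcK.
exact: (esym (etrans (f_equal GRing.inv h) (invrK mu))).
Qed.

Unset Implicit Arguments.
Unset Strict Implicit.
Theorem lemma3 (R : realType) (m N T : nat) (hm : (0 < m)%N) (hN : (0 < N)%N)
  (hT : (0 < T)%N) (gamma : R) (hg0 : 0 <= gamma) (hg1 : gamma < 1)
  (a b : 'I_N -> R)
  (ha : forall i, 0 <= a i <= 1) (hb : forall i, 0 <= b i <= 1)
  (hsa : \sum_(i < N) a i = 1) (hsb : \sum_(i < N) b i = 1)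
  (mu : 'I_m -> R[i]) :
  (forall z : R[i], root (ftilde T gamma a b mu) z -> `|z| < 1)
  <->
  (forall j : 'I_m,
     ext_star (ext_compl (Phi_closed_disc T gamma a b)) (Fin (mu j))).
Proof.
have rootP : forall l, root (ftilde T gamma a b mu) l <-> exists j : 'I_m,
  (('X^N - ((gamma%:C)%:P * Defs.prev b)) ^+ T
     - (((1 - gamma)%:C) ^+ T * mu j)%:P * 'X^(T.-1) * (qrev a) ^+ T).[l] = 0.
  move=> l; rewrite rootE /ftilde horner_prod; split.
    by case/prodf_eq0 => j _ /eqP e; exists j.
  by case=> j e; apply/prodf_eq0; exists j => //; apply/eqP.
split.
  move=> H j; apply/star_iff => hP.
  have [l [hl nl]] := P_to_root hN hT hg0 hg1 hb hsb hP.
  by apply: nl; apply: H; apply/rootP; exists j.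
move=> H z hz; apply: contraT => /negP nz.
have [j hj] := (rootP z).1 hz.
have := H j; move/star_iff => nP; case: nP; exact: (root_to_P hN hT hg0 hg1 hb hsb hj nz).
Qed.
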